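(* Let $m$ range over even integers tending to infinity, with $N=N(m)$, $n=n(m)$ positive integers satisfying $N=o(m)$ and $n=o(m)$, and fix $0<\varepsilon\le1$. Let $\bar J_2=5$. Then, uniformly over all $\omega\in K_m$ and all $x,y\in[m]^N$, $$\log\frac{\Pr_{(u,q^\omega,u)}\big(\{X=x,Y=y\}\cap B\big)}{\Pr_{(u,q^\omega,u)}\{X=x,Y=y\}}\ \ge\ -\bar J_2\,\frac{Nn+n^2}{m}\,(1+o(1)),$$ $$\log\frac{\Pr_{(u,q^\omega,q^\omega)}\big(\{X=x,Y=y\}\cap B\big)}{\Pr_{(u,q^\omega,q^\omega)}\{X=x,Y=y\}}\ \ge\ -\bar J_2\,\frac{Nn+n^2}{m}\,(1+o(1)),$$ where $B$ is the event that no symbol appears more than once in $Z$ and no symbol of $Z$ appears in $X$ or in $Y$.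
   Context: Let $u$ be the uniform distribution on $[m]=\{1,\dots,m\}$. Let $K_m$ be the collection of all subsets of $[m]$ of cardinality $m/2$. For $\omega\in K_m$ let $q^\omega$ be the distribution on $[m]$ with $q^\omega_j=(1+\varepsilon)/m$ for $j\in\omega$ and $q^\omega_j=(1-\varepsilon)/m$ for $j\notin\omega$. For distributions $a,b,c$ on $[m]$, $\Pr_{(a,b,c)}$ denotes the probability when $X=(X_1,\dots,X_N)$ is i.i.d. with marginal $a$, $Y=(Y_1,\dots,Y_N)$ is i.i.d. with marginal $b$, $Z=(Z_1,\dots,Z_n)$ is i.i.d. with marginal $c$, and $X,Y,Z$ are independent. *)

(* Defs.v *)
From HB Require Import structures.
From mathcomp Require Import all_boot all_order all_algebra.
From mathcomp Require Import all_classical all_reals all_analysis.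
Set Implicit Arguments. Unset Strict Implicit. Unset Printing Implicit Defensive.
Import Order.TTheory GRing.Theory Num.Theory.
Local Open Scope ring_scope.

(* Symbols [m] = {1..m} are represented by 'I_m = {0..m-1}. *)

Definition unif {R : realType} (m : nat) : 'I_m -> R := fun _ => 1 / m%:R.

Definition qom {R : realType} (m : nat) (eps : R) (om : {set 'I_m}) : 'I_m -> R :=
  fun j => if j \in om then (1 + eps) / m%:R else (1 - eps) / m%:R.

Definition wprob {R : realType} {m k : nat} (a : 'I_m -> R) (w : {ffun 'I_k -> 'I_m}) : R :=
  \prod_(i < k) a (w i).

(* Pr_{(a,b,c)}(E): X ~ a^N, Y ~ b^N, Z ~ c^n, independent *)
Definition Pr3 {R : realType} (m N n : nat) (a b c : 'I_m -> R)
  (E : {ffun 'I_N -> 'I_m} -> {ffun 'I_N -> 'I_m} -> {ffun 'I_n -> 'I_m} -> bool) : R :=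
  \sum_(x : {ffun 'I_N -> 'I_m}) \sum_(y : {ffun 'I_N -> 'I_m}) \sum_(z : {ffun 'I_n -> 'I_m})
    (if E x y z then wprob a x * wprob b y * wprob c z else 0).

Definition eventB {m N n : nat} (x y : {ffun 'I_N -> 'I_m}) (z : {ffun 'I_n -> 'I_m}) : bool :=
  injectiveb z && [forall i, (z i \notin codom x) && (z i \notin codom y)].

Definition evXY {m N n : nat} (x y : {ffun 'I_N -> 'I_m})
  (x' y' : {ffun 'I_N -> 'I_m}) (z : {ffun 'I_n -> 'I_m}) : bool :=
  (x' == x) && (y' == y).

Definition evXYB {m N n : nat} (x y : {ffun 'I_N -> 'I_m})
  (x' y' : {ffun 'I_N -> 'I_m}) (z : {ffun 'I_n -> 'I_m}) : bool :=
  evXY x y x' y' z && eventB x' y' z.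

Definition Jbar2 {R : realType} : R := 5.

(* Main.v *)
Require Import Defs.
From HB Require Import structures.
From mathcomp Require Import all_boot all_order all_algebra.
From mathcomp Require Import all_classical all_reals all_analysis.
From mathcomp Require Import ring lra zify.
Import Order.TTheory GRing.Theory Num.Theory.
Local Open Scope ring_scope.


Section Comb.
Variables (R : realType) (T : finType).

Definition fcons {k} (j : T) (z : {ffun 'I_k -> T}) : {ffun 'I_k.+1 -> T} :=
  [ffun i => if unlift ord0 i is Some i' then z i' else j].

Lemma fcons0 k j (z : {ffun 'I_k -> T}) : fcons j z ord0 = j.
Proof. by rewrite /fcons ffunE unlift_none. Qed.

Lemma fconsS k j (z : {ffun 'I_k -> T}) i : fcons j z (lift ord0 i) = z i.
Proof. by rewrite /fcons ffunE liftK. Qed.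

Lemma sum_ffunS k (F : {ffun 'I_k.+1 -> T} -> R) :
  \sum_z F z = \sum_(j : T) \sum_(z : {ffun 'I_k -> T}) F (fcons j z).
Proof.
rewrite pair_bigA /=.
rewrite (reindex (fun p : T * {ffun 'I_k -> T} => fcons p.1 p.2)) //=.
exists (fun z : {ffun 'I_k.+1 -> T} => (z ord0, [ffun i => z (lift ord0 i)])).
  by move=> [j z] _ /=; rewrite fcons0; congr pair; apply/ffunP=> i; rewrite ffunE fconsS.
move=> z _ /=; apply/ffunP=> i; rewrite /fcons ffunE.
case: unliftP => [i'|] ->; first by rewrite ffunE.
by [].
Qed.

Lemma comb_bound (c : T -> R) (d : R) (d0 : 0 <= d) (c0 : forall j, 0 <= c j) (cd : forall j, c j <= d) k :
  forall S : {set T}, k%:R * d <= \sum_(j in ~: S) c j ->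
  \prod_(i < k) (\sum_(j in ~: S) c j - i%:R * d) <=
  \sum_(z : {ffun 'I_k -> T})
     (if injectiveb z && [forall i, z i \notin S] then \prod_(i < k) c (z i) else 0).
Proof.
elim: k => [|k IH] S hS.
  rewrite big_ord0.
  have -> : \sum_(z : {ffun 'I_0 -> T})
     (if injectiveb z && [forall i, z i \notin S] then \prod_(i < 0) c (z i) else 0)
     = \sum_(z : {ffun 'I_0 -> T}) 1.
    apply: eq_bigr => z _.
    have -> : injectiveb z by apply/injectiveP => -[].
    have -> : [forall i, z i \notin S] by apply/forallP => -[].
    by rewrite big_ord0.
  by rewrite sumr_const card_ffun !card_ord expn0.
set cS := \sum_(j in ~: S) c j.
have key : forall j, j \notin S -> cS = c j + \sum_(i in ~: (j |: S)) c i.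
  move=> j jS; rewrite /cS (bigD1 j) ?inE //=; congr (_ + _).
  by apply: eq_bigl => i; rewrite !inE negb_or andbC.
rewrite big_ord_recl /= mul0r subr0 sum_ffunS.
set B := \prod_(i < k) _.
have B0 : 0 <= B.
  rewrite /B; apply: prodr_ge0 => i _; rewrite subr_ge0 (le_trans _ hS) // ler_wpM2r //.
  by rewrite ler_nat /bump leq0n add1n ltnS ltnW.
have step : forall j, (if j \in S then 0 else c j * B) <=
   \sum_(z : {ffun 'I_k -> T})
     (if injectiveb (fcons j z) && [forall i, fcons j z i \notin S]
      then \prod_(i < k.+1) c (fcons j z i) else 0).
  move=> j; case: ifPn => jS.
    by apply: sumr_ge0 => z _; case: ifP => // _; apply: prodr_ge0.
  have hk : k%:R * d <= \sum_(i in ~: (j |: S)) c i.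
    have := key j jS; rewrite -/cS => e.
    have : \sum_(i in ~: (j |: S)) c i = cS - c j by rewrite e [c j + _]addrC addrK.
    move=> ->; rewrite lerBrDr; apply: le_trans hS.
    by rewrite -nat1r mulrDl mul1r [d + _]addrC lerD2l.
  apply: le_trans (_ : c j * \sum_(z : {ffun 'I_k -> T})
     (if injectiveb z && [forall i, z i \notin j |: S] then \prod_(i < k) c (z i) else 0) <= _).
    rewrite ler_wpM2l //; apply: le_trans (IH _ hk).
    apply: ler_prod => i _; apply/andP; split.
      rewrite subr_ge0 (le_trans _ hS) // ler_wpM2r // ler_nat.
      by apply: leq_trans (ltn_ord i) _.
    rewrite (key j jS) /bump leq0n add1n -nat1r; have := cd j; lra.
  rewrite mulr_sumr; apply: ler_sum => z _.
  case: ifPn => [/andP[/injectiveP zi /forallP zS]|_]; last first.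
    by rewrite mulr0; case: ifP => // _; apply: prodr_ge0.
  have -> : injectiveb (fcons j z) && [forall i, fcons j z i \notin S].
    apply/andP; split.
      apply/injectiveP => i1 i2; rewrite /fcons !ffunE.
      case: unliftP => [a ->|<-]; case: unliftP => [b ->|<-] //.
      - by move/zi ->.
      - by move=> e; have := zS a; rewrite e !inE eqxx.
      - by move=> e; have := zS b; rewrite -e !inE eqxx.
    apply/forallP => i; rewrite /fcons ffunE; case: unliftP => [a _|_] //.
    by have := zS a; rewrite !inE negb_or => /andP[].
  rewrite big_ord_recl fcons0 [X in _ <= _ * X](_ : _ = \prod_(i < k) c (z i)) //.
  apply: eq_bigr => i _.
  by rewrite /fcons ffunE liftK.
rewrite /cS mulr_suml big_mkcond /=; apply: ler_sum => j _.
by apply: le_trans (step j); rewrite inE; case: (j \in S).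
Qed.
End Comb.

Lemma Pr_XY (R : realType) m N n (a b c : 'I_m -> R) (x y : {ffun 'I_N -> 'I_m}) :
  Pr3 a b c (@evXY m N n x y) = wprob a x * wprob b y * \sum_(z : {ffun 'I_n -> 'I_m}) wprob c z.
Proof.
rewrite /Pr3 (bigD1 x) //= [X in _ + X]big1 ?addr0; last first.
  move=> x' /negbTE hx; apply: big1 => y' _; apply: big1 => z _.
  by rewrite /evXY hx.
rewrite (bigD1 y) //= [X in _ + X]big1 ?addr0; last first.
  move=> y' /negbTE hy; apply: big1 => z _.
  by rewrite /evXY eqxx hy.
by rewrite mulr_sumr; apply: eq_bigr => z _; rewrite /evXY !eqxx.
Qed.

Lemma Pr_XYB (R : realType) m N n (a b c : 'I_m -> R) (x y : {ffun 'I_N -> 'I_m}) :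
  Pr3 a b c (@evXYB m N n x y) = wprob a x * wprob b y *
    \sum_(z : {ffun 'I_n -> 'I_m}) (if eventB x y z then wprob c z else 0).
Proof.
rewrite /Pr3 (bigD1 x) //= [X in _ + X]big1 ?addr0; last first.
  move=> x' /negbTE hx; apply: big1 => y' _; apply: big1 => z _.
  by rewrite /evXYB /evXY hx.
rewrite (bigD1 y) //= [X in _ + X]big1 ?addr0; last first.
  move=> y' /negbTE hy; apply: big1 => z _.
  by rewrite /evXYB /evXY eqxx hy.
rewrite mulr_sumr; apply: eq_bigr => z _; rewrite /evXYB /evXY !eqxx /=.
by case: eventB; rewrite ?mulr0.
Qed.

Lemma sum_wprob (R : realType) m n (c : 'I_m -> R) :
  \sum_(z : {ffun 'I_n -> 'I_m}) wprob c z = (\sum_j c j) ^+ n.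
Proof.
rewrite /wprob -(bigA_distr_bigA (fun (i : 'I_n) (j : 'I_m) => c j)) /=.
by rewrite prodr_const card_ord.
Qed.

Theorem lemma4 (R : realType) (N n : nat -> nat) (eps : R)
  (heps0 : 0 < eps) (heps1 : eps <= 1)
  (hNpos : forall m : nat, ~~ odd m -> (0 < N m)%N)
  (hnpos : forall m : nat, ~~ odd m -> (0 < n m)%N)
  (hNo : forall eta : R, 0 < eta -> exists M : nat, forall m : nat,
      (M <= m)%N -> ~~ odd m -> (N m)%:R <= eta * m%:R)
  (hno : forall eta : R, 0 < eta -> exists M : nat, forall m : nat,
      (M <= m)%N -> ~~ odd m -> (n m)%:R <= eta * m%:R) :
  forall eta : R, 0 < eta -> exists M : nat, forall m : nat,
    (M <= m)%N -> ~~ odd m ->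
    forall (om : {set 'I_m}), #|om| = m./2 ->
    forall x y : {ffun 'I_(N m) -> 'I_m},
    forall c : 'I_m -> R, (c = @unif R m \/ c = @qom R m eps om) ->
    0 < @Pr3 R m (N m) (n m) (@unif R m) (@qom R m eps om) c (@evXY m (N m) (n m) x y) ->
    - Jbar2 * (((N m * n m + n m ^ 2)%:R) / m%:R) * (1 + eta)
      <= ln (@Pr3 R m (N m) (n m) (@unif R m) (@qom R m eps om) c (@evXYB m (N m) (n m) x y)
             / @Pr3 R m (N m) (n m) (@unif R m) (@qom R m eps om) c (@evXY m (N m) (n m) x y)).
Proof.
move=> eta eta0.
have [M1 HM1] := hNo (1/40) ltac:(lra).
have [M2 HM2] := hno (1/20) ltac:(lra).
exists (maxn 1 (maxn M1 M2)) => m hm ev om hom x y c hc hpos.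
have m1 : (1 <= m)%N by apply: leq_trans hm; rewrite leq_maxl.
have hM12 : (maxn M1 M2 <= m)%N by apply: leq_trans hm; rewrite leq_maxr.
have hN := HM1 m (leq_trans (leq_maxl _ _) hM12) ev.
have hn := HM2 m (leq_trans (leq_maxr _ _) hM12) ev.
rewrite Pr_XYB Pr_XY sum_wprob in hpos *.
have mr0 : 0 < (m%:R : R) by rewrite ltr0n.
set d : R := 2 / m%:R.
have md : m%:R * d = 2 by rewrite /d mulrC mulfVK // gt_eqF.
have d0 : 0 <= d by rewrite /d divr_ge0 // ler0n.
have c0 : forall j, 0 <= c j.
  by move=> j; case: hc => ->; rewrite /unif /qom; [|case: ifP => _];
     rewrite divr_ge0 ?ler0n //; lra.
have cd : forall j, c j <= d.
  move=> j; case: hc => ->; rewrite /unif /qom /d; [|case: ifP => _];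
     rewrite ler_pM2r ?invr_gt0 //; lra.
have hhalf : m = (m./2 + m./2)%N.
  by rewrite addnn -[LHS]odd_double_half (negbTE ev).
have csum : \sum_j c j = 1.
  case: hc => ->.
    rewrite /unif sumr_const card_ord -(mulr_natr (1 / m%:R) m) div1r mulVf //.
    by rewrite gt_eqF.
  rewrite /qom (bigID (mem om)) /=.
  rewrite (eq_bigr (fun _ => (1 + eps) / m%:R)); last by move=> j ->.
  rewrite [X in _ + X](eq_bigr (fun _ => (1 - eps) / m%:R)); last first.
    by move=> j /negbTE ->.
  rewrite !sumr_const.
  have hc : #|[pred j | ~~ (j \in om)]| = m./2.
    have := cardC (mem om); rewrite card_ord hom => e.
    have -> : #|[pred j | j \notin om]| = #|[predC mem om]| by apply: eq_card.
    by apply/eqP; rewrite -(eqn_add2l m./2) e -hhalf.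
  rewrite hom (eq_card (B := [pred j | j \notin om])) // hc.
  rewrite -(mulr_natr ((1 + eps) / m%:R) m./2) -(mulr_natr ((1 - eps) / m%:R) m./2).
  have mh : m%:R = m./2%:R + m./2%:R :> R by rewrite {1}hhalf natrD.
  have h0 : (m./2%:R : R) != 0.
    by rewrite pnatr_eq0 -lt0n; move: m1; rewrite {1}hhalf; case: (m./2).
  rewrite mh; field.
  by rewrite -mh gt_eqF.
rewrite csum expr1n mulr1 in hpos *.
rewrite [wprob _ x * wprob _ y * _]mulrC mulfK; last by rewrite gt_eqF.
set S := [set j | (j \in codom x) || (j \in codom y)].
have cardS : (#|S| <= N m + N m)%N.
  have -> : S = [set j in codom x] :|: [set j in codom y].
    by apply/setP => j; rewrite !inE.
  apply: leq_trans (leq_card_setU _ _) _; rewrite !cardsE.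
  by apply: leq_add; apply: leq_trans (card_size _) _; rewrite size_codom card_ord.
set cS := \sum_(j in ~: S) c j.
have cSge : 1 - (N m + N m)%:R * d <= cS.
  have e : \sum_j c j = \sum_(j in S) c j + cS.
    rewrite [LHS](bigID (mem S)) /= /cS; congr (_ + _). 
    by apply: eq_bigl => j; rewrite finset.in_setC.
  have hS : \sum_(j in S) c j <= #|S|%:R * d.
    rewrite mulr_natl -sumr_const; exact: ler_sum.
  have : (#|S|%:R : R) <= (N m + N m)%:R by rewrite ler_nat.
  move=> h1; have h2 := ler_wpM2r d0 h1.
  rewrite csum in e; lra.
set t : R := (N m + N m + n m)%:R * d.
have hNd : (N m)%:R * d <= 1/20.
  have := ler_wpM2r d0 hN; rewrite -mulrA md; lra.
have hnd : (n m)%:R * d <= 1/10.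
  have := ler_wpM2r d0 hn; rewrite -mulrA md; lra.
have tE : t = 2 * ((N m)%:R * d) + (n m)%:R * d by rewrite /t !natrD; ring.
have t0 : 0 <= t by rewrite /t mulr_ge0.
have t5 : t <= 1/5 by rewrite tE; lra.
have hk : (n m)%:R * d <= cS by move: cSge; rewrite natrD mulrDl; lra.
have F0 := @comb_bound R _ c d d0 c0 cd (n m) S hk.
set F := \sum_z (if eventB x y z then wprob c z else 0).
have FE : F = \sum_(z : {ffun 'I_(n m) -> 'I_m})
     (if injectiveb z && [forall i, z i \notin S] then \prod_(i < n m) c (z i) else 0).
  apply: eq_bigr => z _; rewrite /eventB; congr (if _ then _ else _).
  congr (_ && _); apply: eq_forallb => i; rewrite inE negb_or.
  done.
have Flo : (1 - t) ^+ n m <= F.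
  rewrite FE; apply: le_trans F0.
  have -> : (1 - t) ^+ n m = \prod_(i < n m) (1 - t) by rewrite prodr_const card_ord.
  apply: ler_prod => i _; apply/andP; split; first lra.
  have : (i%:R : R) <= (n m)%:R by rewrite ler_nat ltnW.
  move=> /(ler_wpM2r d0) hi.
  by move: cSge; rewrite /cS natrD mulrDl tE; lra.
have t1 : 0 < 1 - t by lra.
have lnb : - (5/4 * t) <= ln (1 - t).
  have u0 : 0 < (1 - t)^-1 by rewrite invr_gt0.
  have l1 : ln ((1 - t)^-1) <= (1 - t)^-1 - 1.
    by have := @le_ln1Dx R ((1 - t)^-1 - 1) ltac:(lra); rewrite addrC subrK.
  have l2 : (1 - t)^-1 <= 1 + 5/4 * t.
    rewrite -[X in X <= _]mulr1 ler_pdivrMl //; nra.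
  have e : ln ((1 - t)^-1) = - ln (1 - t) by apply: lnV; rewrite posrE.
  lra.
have Fpos : 0 < F by apply: lt_le_trans Flo; rewrite exprn_gt0.
have : ln ((1 - t) ^+ n m) <= ln F by rewrite ler_ln ?posrE // exprn_gt0.
move=> hl; rewrite lnXn // -mulr_natl in hl.
apply: le_trans _ hl.
have hB := ler_wpM2l (ler0n R (n m)) lnb.
apply: le_trans _ hB.
rewrite /Jbar2 tE /d natrD natrM natrX.
have r0 : 0 < (m%:R : R)^-1 by rewrite invr_gt0.
set r := (m%:R : R)^-1.
set A := ((N m)%:R : R). set B := ((n m)%:R : R).
have A0 : 0 <= A by rewrite ler0n.
have B0 : 0 <= B by rewrite ler0n.
have p1 : 0 <= (A * B + B ^+ 2) * r * eta.
  apply: mulr_ge0; last exact: ltW.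
  apply: mulr_ge0; last exact: ltW.
  by apply: addr_ge0; [apply: mulr_ge0|apply: sqr_ge0].
have p2 : 0 <= B ^+ 2 * r by apply: mulr_ge0; [apply: sqr_ge0|apply: ltW].
rewrite /A /B /r in p1 p2 *.
nra.
Qed.
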